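(* Let $E,F$ be projections in $\mathcal B(\mathcal H)$. The following are equivalent: (1) $E\wedge F=0$ and $(E\vee F)\mathcal H=\{\xi+\beta:\ \xi\in E\mathcal H,\ \beta\in F\mathcal H\}$; (2) $E-F$ restricts to an invertible operator in $\mathcal B((E\vee F)\mathcal H)$; (3) $(E\vee F-F)E$ is an invertible operator in $\mathcal B(E\mathcal H,(E\vee F-F)\mathcal H)$. If these conditions hold, then $$\|((E-F)|_{(E\vee F)\mathcal H})^{-1}\|=(1-\|EF\|^2)^{-1/2}=\|[(E\vee F-F)E]^{-1}\|.$$ *)

(* Defs.v *)
From HB Require Import structures.
From mathcomp Require Import all_boot all_order all_algebra.
From mathcomp Require Import complex.
From mathcomp Require Import classical_sets reals.
Set Implicit Arguments. Unset Strict Implicit. Unset Printing Implicit Defensive.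
Import Order.TTheory GRing.Theory Num.Theory.
Local Open Scope ring_scope.
Local Open Scope classical_set_scope.

Section Hilbert.
Variables (R : realType) (V : lmodType R[i]) (ip : V -> V -> R[i]).

Definition hnorm (x : V) : R := Num.sqrt (complex.Re (ip x x)).

Definition is_hilbert : Prop :=
  [/\ (forall (a : R[i]) (x y z : V), ip (a *: x + y) z = a * ip x z + ip y z),
      (forall x y : V, ip y x = conjc (ip x y)),
      (forall x : V, complex.Im (ip x x) = 0 /\ 0 <= complex.Re (ip x x)),
      (forall x : V, ip x x = 0 -> x = 0) &
      (forall u : nat -> V,
         (forall e : R, 0 < e -> exists N, forall m n, (N <= m)%N -> (N <= n)%N ->
              hnorm (u m - u n) < e) ->
         exists l : V, forall e : R, 0 < e -> exists N, forall n, (N <= n)%N ->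
              hnorm (u n - l) < e)].

Definition is_bounded_op (T : V -> V) : Prop :=
  (forall (a : R[i]) (x y : V), T (a *: x + y) = a *: T x + T y) /\
  (exists C : R, forall x, hnorm (T x) <= C * hnorm x).

Definition is_projection (E : V -> V) : Prop :=
  [/\ is_bounded_op E, (forall x, E (E x) = E x) &
      (forall x y, ip (E x) y = ip x (E y))].

(** the range E H is the library's [range E] (= E @` setT) *)

Definition hclosure (S : set V) : set V :=
  [set y | forall e : R, 0 < e -> exists z, S z /\ hnorm (y - z) < e].

Definition is_join (E F P : V -> V) : Prop :=
  is_projection P /\
  range P = hclosure [set y | exists a b, y = E a + F b].

Definition is_meet (E F Q : V -> V) : Prop :=
  is_projection Q /\ range Q = range E `&` range F.

(** G is a two-sided inverse, in B(N, M), of the operator T : M -> N,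
    where M, N are (closed) subspaces of V; G is given as a map on V
    whose values only matter on N. *)
Definition is_inverse_between (M N : set V) (T G : V -> V) : Prop :=
  [/\ (forall y, N y -> M (G y)),
      (forall (a : R[i]) y z, N y -> N z -> G (a *: y + z) = a *: G y + G z),
      (exists C : R, forall y, N y -> hnorm (G y) <= C * hnorm y),
      (forall x, M x -> G (T x) = x) &
      (forall y, N y -> T (G y) = y)].

Definition invertible_between (M N : set V) (T : V -> V) : Prop :=
  (forall x, M x -> N (T x)) /\ exists G, is_inverse_between M N T G.

Definition opnorm_on (M : set V) (G : V -> V) : R :=
  sup [set r : R | exists y, [/\ M y, hnorm y <= 1 & r = hnorm (G y)]].

Definition opnorm (G : V -> V) : R := opnorm_on setT G.

End Hilbert.

(* Main.v *)
Require Import Defs.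
From HB Require Import structures.
From mathcomp Require Import all_boot all_order all_algebra.
From mathcomp Require Import complex.
From mathcomp Require Import classical_sets reals.
From mathcomp Require Import boolp.
From mathcomp Require Import ring lra.
Import Order.TTheory GRing.Theory Num.Theory.
Local Open Scope ring_scope.
Local Open Scope classical_set_scope.
Set Implicit Arguments. Unset Strict Implicit. Unset Printing Implicit Defensive.
Section Basics.
Variables (R : realType) (V : lmodType R[i]) (ip : V -> V -> R[i]).
Hypothesis Hh : is_hilbert ip.
Local Notation nm := (hnorm ip).
Local Notation Re := complex.Re.
Local Notation Im := complex.Im.

Lemma ReD (x y : R[i]) : Re (x + y) = Re x + Re y.
Proof. by case: x; case: y. Qed.
Lemma ReN (x : R[i]) : Re (- x) = - Re x.
Proof. by case: x. Qed.
Lemma ReRM (a : R) (x : R[i]) : Re ((a%:C)%C * x) = a * Re x.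
Proof. case: x => u v /=. ring. Qed.
Lemma ReJ (x : R[i]) : Re (conjc x) = Re x.
Proof. by case: x. Qed.

Lemma conjD (x y : R[i]) : conjc (x + y) = conjc x + conjc y.
Proof. by case: x => a b; case: y => c d /=; rewrite opprD. Qed.
Lemma conjM (x y : R[i]) : conjc (x * y) = conjc x * conjc y.
Proof. by case: x => a b; case: y => c d /=; apply/eqP; rewrite eq_complex /=; apply/andP; split; apply/eqP; ring. Qed.
Lemma conjN (x : R[i]) : conjc (- x) = - conjc x.
Proof. by case: x. Qed.
Lemma conj0 : conjc (0 : R[i]) = 0.
Proof. by apply/eqP; rewrite eq_complex /= oppr0 !eqxx. Qed.

Lemma ipl a x y z : ip (a *: x + y) z = a * ip x z + ip y z.
Proof. by case: Hh. Qed.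
Lemma ipc x y : ip y x = conjc (ip x y).
Proof. by case: Hh. Qed.
Lemma ippos x : Im (ip x x) = 0 /\ 0 <= Re (ip x x).
Proof. by case: Hh. Qed.
Lemma ipdef x : ip x x = 0 -> x = 0.
Proof. by case: Hh => _ _ _ H _; apply: H. Qed.

Lemma ip0l z : ip 0 z = 0.
Proof.
have := ipl 1 0 0 z; rewrite scaler0 addr0 mul1r.
by rewrite -{1}[ip 0 z]addr0 => /addrI ->.
Qed.
Lemma ipDl x y z : ip (x + y) z = ip x z + ip y z.
Proof. by have := ipl 1 x y z; rewrite scale1r mul1r. Qed.
Lemma ipZl a x z : ip (a *: x) z = a * ip x z.
Proof. by have := ipl a x 0 z; rewrite !addr0 ip0l addr0. Qed.
Lemma ipNl x z : ip (- x) z = - ip x z.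
Proof. by rewrite -scaleN1r ipZl mulN1r. Qed.
Lemma ipBl x y z : ip (x - y) z = ip x z - ip y z.
Proof. by rewrite ipDl ipNl. Qed.
Lemma ip0r z : ip z 0 = 0.
Proof. by rewrite ipc ip0l conj0. Qed.
Lemma ipDr x y z : ip z (x + y) = ip z x + ip z y.
Proof. by rewrite ipc ipDl conjD -!ipc. Qed.
Lemma ipZr a x z : ip z (a *: x) = conjc a * ip z x.
Proof. by rewrite ipc ipZl conjM -ipc. Qed.
Lemma ipNr x z : ip z (- x) = - ip z x.
Proof. by rewrite ipc ipNl conjN -ipc. Qed.
Lemma ipBr x y z : ip z (x - y) = ip z x - ip z y.
Proof. by rewrite ipDr ipNr. Qed.

Lemma nm_ge0 x : 0 <= nm x.
Proof. exact: sqrtr_ge0. Qed.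
Lemma nm_sq x : nm x ^+ 2 = Re (ip x x).
Proof. by rewrite /hnorm sqr_sqrtr //; case: (ippos x). Qed.
Lemma ReipC x y : Re (ip y x) = Re (ip x y).
Proof. by rewrite ipc ReJ. Qed.

Lemma nmD2 x y : nm (x + y) ^+ 2 = nm x ^+ 2 + nm y ^+ 2 + 2 * Re (ip x y).
Proof.
rewrite !nm_sq !ipDl !ipDr !ReD (ReipC x y); ring.
Qed.
Lemma nmB2 x y : nm (x - y) ^+ 2 = nm x ^+ 2 + nm y ^+ 2 - 2 * Re (ip x y).
Proof.
rewrite !nm_sq !ipDl !ipDr !ipNl !ipNr !ReD !ReN opprK (ReipC x y); ring.
Qed.
Lemma nmZ2 (t : R) x : nm ((t%:C)%C *: x) ^+ 2 = t ^+ 2 * nm x ^+ 2.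
Proof.
rewrite !nm_sq ipZl ipZr conjc_real mulrA -rmorphM ReRM; ring.
Qed.
Lemma nm0 : nm 0 = 0.
Proof. by rewrite /hnorm ip0l sqrtr0. Qed.
Lemma nm_eq0 x : nm x = 0 -> x = 0.
Proof.
move=> h; apply: ipdef; have := nm_sq x; rewrite h expr0n /= => h2.
case: (ippos x) => h1 _; move: h1 h2; case: (ip x x) => a b /= -> <-. by [].
Qed.
Lemma nmN x : nm (- x) = nm x.
Proof. by rewrite /hnorm ipNl ipNr opprK. Qed.
Lemma nmBC x y : nm (x - y) = nm (y - x).
Proof. by rewrite -nmN opprB. Qed.

Lemma sq_le (a b : R) : 0 <= b -> a ^+ 2 <= b ^+ 2 -> a <= b.
Proof. move=> hb h; nra. Qed.
Lemma sq_le_abs (a b : R) : 0 <= a -> 0 <= b -> a ^+ 2 <= b ^+ 2 -> a <= b.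
Proof. move=> ha hb h; nra. Qed.

Lemma CS x y : Re (ip x y) <= nm x * nm y.
Proof.
have hx := nm_ge0 x; have hy := nm_ge0 y.
apply: sq_le; first exact: mulr_ge0.
have [y0|ny] := eqVneq (nm y) 0.
  by rewrite (nm_eq0 y0) ip0r nm0 mulr0 expr0n /=.
have yp : 0 < nm y by rewrite lt_def ny hy.
set b := Re (ip x y).
have := nm_ge0 (x - ((b / nm y ^+ 2)%:C)%C *: y).
move=> _.
have h := nmB2 x (((b / nm y ^+ 2)%:C)%C *: y).
rewrite nmZ2 ipZr conjc_real ReRM -/b in h.
have h0 : 0 <= nm (x - ((b / nm y ^+ 2)%:C)%C *: y) ^+ 2 by rewrite exprn_ge0 // nm_ge0.
rewrite h in h0.
have e : (b / nm y ^+ 2) ^+ 2 * nm y ^+ 2 = b ^+2 / nm y ^+ 2.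
  by field; rewrite ny.
have e2 : 2 * (b / nm y ^+ 2 * b) = 2 * (b ^+2 / nm y ^+ 2) by rewrite mulrAC expr2 mulrA.
rewrite e e2 in h0.
have : b ^+ 2 / nm y ^+ 2 <= nm x ^+ 2 by lra.
rewrite ler_pdivrMr ?exprn_gt0 // => h3.
by rewrite exprMn.
Qed.

Lemma nm_triangle x y : nm (x + y) <= nm x + nm y.
Proof.
apply: sq_le; first by rewrite addr_ge0 ?nm_ge0.
rewrite nmD2; have := CS x y; have := nm_ge0 x; have := nm_ge0 y. nra.
Qed.
Lemma nm_tri3 x y z : nm (x - z) <= nm (x - y) + nm (y - z).
Proof. by have := nm_triangle (x - y) (y - z); rewrite addrA subrK. Qed.

Lemma nmZ (t : R) x : nm ((t%:C)%C *: x) = `|t| * nm x.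
Proof.
apply/eqP; rewrite -(@eqrXn2 _ 2) //; last by rewrite mulr_ge0 ?nm_ge0.
  by rewrite nmZ2 exprMn real_normK ?num_real.
exact: nm_ge0.
Qed.
End Basics.
Section Ops.
Variables (R : realType) (V : lmodType R[i]) (ip : V -> V -> R[i]).
Hypothesis Hh : is_hilbert ip.
Local Notation nm := (hnorm ip).
Local Notation Re := complex.Re.
Local Notation Im := complex.Im.

Definition lin (T : V -> V) := forall a x y, T (a *: x + y) = a *: T x + T y.

Section Lin.
Variables (T : V -> V) (hT : lin T).
Lemma lin0 : T 0 = 0.
Proof.
have := hT 1 0 0; rewrite scaler0 addr0 scale1r.
by rewrite -{1}[T 0]addr0 => /addrI /esym.
Qed.
Lemma linD x y : T (x + y) = T x + T y.
Proof. by have := hT 1 x y; rewrite !scale1r. Qed.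
Lemma linZ a x : T (a *: x) = a *: T x.
Proof. by have := hT a x 0; rewrite !addr0 lin0 addr0. Qed.
Lemma linN x : T (- x) = - T x.
Proof. by rewrite -scaleN1r linZ scaleN1r. Qed.
Lemma linB x y : T (x - y) = T x - T y.
Proof. by rewrite linD linN. Qed.
End Lin.

Lemma le0_small (a : R) : (forall e, 0 < e -> a <= e) -> a <= 0.
Proof.
move=> h; rewrite leNgt; apply/negP => ha.
have := h (a / 2); rewrite divr_gt0 // => /(_ isT). lra.
Qed.

Lemma nm_small_eq0 x : (forall e, 0 < e -> nm x <= e) -> x = 0.
Proof.
move=> h; apply: (nm_eq0 Hh); apply/eqP; rewrite eq_le nm_ge0 // andbT.
exact: le0_small.
Qed.

Lemma ip_ext a b : (forall z, ip a z = ip b z) -> a = b.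
Proof.
move=> h; apply/eqP; rewrite -subr_eq0; apply/eqP; apply: (ipdef Hh).
by rewrite (ipBl Hh) h subrr.
Qed.

Section Proj.
Variables (E : V -> V) (hE : is_projection ip E).
Lemma pr_lin : lin E. Proof. by case: hE => [[]]. Qed.
Lemma pr_idem x : E (E x) = E x. Proof. by case: hE. Qed.
Lemma pr_sa x y : ip (E x) y = ip x (E y). Proof. by case: hE. Qed.
Lemma pr_bnd : exists C : R, forall x, nm (E x) <= C * nm x.
Proof. by case: hE => [[]]. Qed.
Lemma pr_orth x y : ip (E x) (y - E y) = 0.
Proof. by rewrite pr_sa (linB pr_lin) pr_idem subrr (ip0r Hh). Qed.
Lemma pr_orth' x y : ip (y - E y) (E x) = 0.
Proof. by rewrite (ipc Hh) pr_orth conj0. Qed.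
Lemma pr_pyth x : nm x ^+ 2 = nm (E x) ^+ 2 + nm (x - E x) ^+ 2.
Proof.
have -> : nm x = nm (E x + (x - E x)) by rewrite addrC subrK.
by rewrite (nmD2 Hh) pr_orth /= mulr0 addr0.
Qed.
Lemma pr_contr x : nm (E x) <= nm x.
Proof.
apply: (sq_le_abs); rewrite ?nm_ge0 // (pr_pyth x).
by rewrite lerDl exprn_ge0 // nm_ge0.
Qed.
Lemma pr_ipE x : ip (E x) x = ip (E x) (E x).
Proof. by have := pr_sa (E x) x; rewrite pr_idem. Qed.
Lemma pr_ReE x : Re (ip (E x) x) = nm (E x) ^+ 2.
Proof. by rewrite (nm_sq Hh) pr_ipE. Qed.
End Proj.

Definition cvgV (u : nat -> V) (l : V) :=
  forall e, 0 < e -> exists N, forall n, (N <= n)%N -> nm (u n - l) < e.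

Lemma complete (u : nat -> V) :
  (forall e : R, 0 < e -> exists N, forall m n, (N <= m)%N -> (N <= n)%N ->
              nm (u m - u n) < e) -> exists l, cvgV u l.
Proof. by case: Hh => _ _ _ _ H; apply: H. Qed.

Lemma cvg_bnd (T : V -> V) (C : R) u l : lin T -> (forall x, nm (T x) <= C * nm x) ->
  cvgV u l -> cvgV (fun n => T (u n)) (T l).
Proof.
move=> hT hC hu e e0.
have {}hC : forall x, nm (T x) <= `|C| * nm x.
  move=> x; apply: le_trans (hC x) _; rewrite ler_wpM2r ?nm_ge0 //; exact: ler_norm.
have C0 : 0 <= `|C| by apply: normr_ge0.
have C1 : 0 < `|C| + 1 by lra.
have [N hN] := hu (e / (`|C| + 1)) (divr_gt0 e0 C1).
exists N => n /hN h; rewrite -(linB hT).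
apply: le_lt_trans (hC _) _.
have h1 : `|C| * nm (u n - l) <= (`|C| + 1) * nm (u n - l).
  by rewrite ler_wpM2r ?nm_ge0 // lerDl.
apply: le_lt_trans h1 _.
by rewrite mulrC -ltr_pdivlMr.
Qed.
End Ops.
Section Lim.
Variables (R : realType) (V : lmodType R[i]) (ip : V -> V -> R[i]).
Hypothesis Hh : is_hilbert ip.
Local Notation nm := (hnorm ip).
Local Notation cvg := (cvgV ip).

Lemma eq_small a b : (forall e : R, 0 < e -> nm (a - b) <= e) -> a = b.
Proof. by move=> h; apply/eqP; rewrite -subr_eq0; apply/eqP; apply: (nm_small_eq0 Hh). Qed.

Lemma cvg_proj (E : V -> V) u l : is_projection ip E -> (forall n, E (u n) = u n) ->
  cvg u l -> E l = l.
Proof.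
move=> hE hu hc; apply: eq_small => e e0.
have [N hN] := hc (e / 2) (divr_gt0 e0 (ltr0Sn _ 1)).
have h := hN N (leqnn N).
apply: le_trans (nm_tri3 Hh _ (E (u N)) _) _.
rewrite -(linB (pr_lin hE)) hu.
have := pr_contr Hh hE (l - u N); rewrite (nmBC Hh l) => h1.
have : nm (u N - l) <= e / 2 by apply: ltW.
lra.
Qed.

Lemma cvg_nm_le u l (B : R) : cvg u l -> (forall n, nm (u n) <= B) -> nm l <= B.
Proof.
move=> hc hB; rewrite -subr_le0; apply: le0_small => e e0.
have [N hN] := hc e e0.
have := nm_tri3 Hh l (u N) 0; rewrite !subr0 (nmBC Hh) => h.
have h1 := hN N (leqnn N); have h2 := hB N; lra.
Qed.

Lemma cvg_uniq u l l' : cvg u l -> cvg u l' -> l = l'.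
Proof.
move=> h1 h2; apply: eq_small => e e0.
have [N1 hN1] := h1 (e / 2) (divr_gt0 e0 (ltr0Sn _ 1)).
have [N2 hN2] := h2 (e / 2) (divr_gt0 e0 (ltr0Sn _ 1)).
have a := hN1 _ (leq_maxl N1 N2); have b := hN2 _ (leq_maxr N1 N2).
have := nm_tri3 Hh l (u (maxn N1 N2)) l'; rewrite (nmBC Hh l (u _)) => h; lra.
Qed.

Lemma bernoulli (d : R) n : 0 <= d -> 1 + n%:R * d <= (1 + d) ^+ n.
Proof.
move=> d0; elim: n => [|n IH]; first by rewrite mul0r addr0 expr0.
rewrite exprS -natr1 mulrDl mul1r.
have h1 : 1 <= (1 + d) ^+ n by rewrite exprn_ege1 // lerDl.
have : 0 <= n%:R * d by rewrite mulr_ge0.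
nra.
Qed.

Lemma pow_small (q e : R) : 0 <= q < 1 -> 0 < e -> exists n, q ^+ n < e.
Proof.
move=> /andP[q0 q1] e0.
have [->|qn0] := eqVneq q 0; first by exists 1%N; rewrite expr1.
have qp : 0 < q by rewrite lt_def qn0 q0.
set d := q^-1 - 1.
have dp : 0 < d by rewrite subr_gt0 invf_gt1.
set n := (Num.truncn (e^-1 / d)).+1.
exists n.
have hn : e^-1 / d < n%:R by apply: truncnS_gt.
have hb := bernoulli n (ltW dp).
have e1 : 1 + d = q^-1 by rewrite /d addrC subrK.
rewrite e1 exprVn in hb.
have : e^-1 < n%:R * d by rewrite -ltr_pdivrMr.
move=> h2.
have h3 : e^-1 < (q ^+ n)^-1 by apply: lt_le_trans hb; lra.
rewrite ltf_pV2 ?posrE ?exprn_gt0 ?invr_gt0 // in h3.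
Qed.

Lemma cauchy_geom (u : nat -> V) (K q : R) : 0 <= K -> 0 <= q < 1 ->
  (forall n, nm (u n.+1 - u n) <= K * q ^+ n) -> exists l, cvg u l.
Proof.
move=> K0 /andP[q0 q1] hu.
have q1' : 0 < 1 - q by rewrite subr_gt0.
have key : forall n k, nm (u (n + k)%N - u n) <= K * (q ^+ n - q ^+ (n + k)) / (1 - q).
  move=> n; elim=> [|k IH]; first by rewrite addn0 subrr (nm0 Hh) subrr mulr0 mul0r.
  apply: le_trans (nm_tri3 Hh _ (u (n + k)%N) _) _.
  rewrite addnS; apply: le_trans (lerD (hu _) IH) _.
  rewrite le_eqVlt; apply/orP; left; apply/eqP.
  rewrite exprS; field; by rewrite subr_eq0 eq_sym (lt_eqF q1).
apply: (complete Hh) => e e0.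
have [N hN] : exists N, q ^+ N < e * (1 - q) / (K + 1).
  apply: pow_small; first by rewrite q0 q1.
  by rewrite divr_gt0 ?mulr_gt0 //; lra.
have bnd : forall n m, (N <= n)%N -> (n <= m)%N -> nm (u m - u n) < e.
  move=> n m hn hm.
  have := key n (m - n)%N; rewrite subnKC // => h.
  apply: le_lt_trans h _.
  have qm : 0 <= q ^+ m by rewrite exprn_ge0.
  have qn : q ^+ n <= q ^+ N by apply: ler_wiXn2l => //; exact: ltW.
  have h1 : K * (q ^+ n - q ^+ m) <= K * q ^+ N.
    by apply: ler_wpM2l => //; lra.
  apply: le_lt_trans (ler_wpM2r _ h1) _; first by rewrite invr_ge0 ltW.
  rewrite ltr_pdivrMr // mulrC.
  have K1 : 0 < K + 1 by lra.
  have h3 : q ^+ N * (K + 1) < e * (1 - q) by rewrite -ltr_pdivlMr.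
  have qN : 0 <= q ^+ N by rewrite exprn_ge0.
  nra.
exists N => m n hm hn.
case: (leqP n m) => h; first exact: bnd.
by rewrite (nmBC Hh); apply: bnd => //; apply: ltnW.
Qed.
Lemma cvg_shift u l : cvg u l -> cvg (fun n => u n.+1) l.
Proof. move=> h e e0; have [N hN] := h e e0; exists N => n hn; apply: hN; exact: leqW. Qed.
Lemma cvg_addl u l y : cvg u l -> cvg (fun n => y + u n) (y + l).
Proof. move=> h e e0; have [N hN] := h e e0; exists N => n /hN; by rewrite (addrC y (u n)) addrKA. Qed.
Lemma cvg_subr u l y : cvg u l -> cvg (fun n => u n - y) (l - y).
Proof.
move=> h e e0; have [N hN] := h e e0; exists N => n /hN.
by rewrite opprB addrA subrK.
Qed.
End Lim.
Section Gen.
Variables (R : realType) (V : lmodType R[i]) (ip : V -> V -> R[i]).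
Hypothesis Hh : is_hilbert ip.
Local Notation nm := (hnorm ip).
Local Notation cvg := (cvgV ip).

Definition subsp (M : set V) := M 0 /\ (forall a x y, M x -> M y -> M (a *: x + y)).
Definition linon (M : set V) (G : V -> V) :=
  forall a y z, M y -> M z -> G (a *: y + z) = a *: G y + G z.

Lemma subspZ M a x : subsp M -> M x -> M (a *: x).
Proof. by case=> h0 h hx; rewrite -[_ *: x]addr0; apply: h. Qed.
Lemma subspB M x y : subsp M -> M x -> M y -> M (x - y).
Proof.
case=> h0 h hx hy; rewrite addrC -scaleN1r; exact: (h _ _ _ hy hx).
Qed.
Lemma subspD M x y : subsp M -> M x -> M y -> M (x + y).
Proof. by case=> h0 h hx hy; rewrite -[x]scale1r; apply: h. Qed.

Lemma linon0 M G : subsp M -> linon M G -> G 0 = 0.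
Proof.
case=> h0 _ hG; have := hG 1 0 0 h0 h0; rewrite scaler0 addr0 scale1r.
by rewrite -{1}[G 0]addr0 => /addrI /esym.
Qed.
Lemma linonZ M G a y : subsp M -> linon M G -> M y -> G (a *: y) = a *: G y.
Proof.
move=> hM hG hy; have := hG a y 0 hy (proj1 hM).
by rewrite addr0 (linon0 hM hG) addr0.
Qed.
Lemma linonB M G y z : subsp M -> linon M G -> M y -> M z -> G (y - z) = G y - G z.
Proof.
move=> hM hG hy hz; rewrite addrC -scaleN1r (hG _ _ _ hz hy).
by rewrite scaleN1r addrC.
Qed.

Lemma range_subsp (T : V -> V) : lin T -> subsp (range T).
Proof.
move=> hT; split; first by exists 0 => //; rewrite (lin0 hT).
move=> a _ _ [x _ <-] [y _ <-]; exists (a *: x + y) => //.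
Qed.

Lemma nmZ1 (t : R) x : 0 <= t -> nm ((t%:C)%C *: x) = t * nm x.
Proof. by move=> t0; rewrite (nmZ Hh) ger0_norm. Qed.

Lemma opn_ub M G (C : R) : subsp M -> linon M G ->
  (forall y, M y -> nm (G y) <= C * nm y) ->
  forall y, M y -> nm (G y) <= opnorm_on ip M G * nm y.
Proof.
move=> hM hG hC y hy.
set S := [set r | exists y, [/\ M y, nm y <= 1 & r = nm (G y)]].
have hs : has_sup S.
  split; first by exists (nm (G 0)); exists 0; split => //; [exact: proj1 hM|rewrite (nm0 Hh)].
  exists `|C| => _ [z [hz hz1 ->]].
  apply: le_trans (hC z hz) _.
  apply: le_trans (ler_wpM2r (nm_ge0 _ _) (ler_norm C)) _.
  by rewrite -[X in _ <= X]mulr1 ler_wpM2l.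
have [y0|yn0] := eqVneq (nm y) 0.
  by rewrite (nm_eq0 Hh y0) (linon0 hM hG) !(nm0 Hh) mulr0.
have yp : 0 < nm y by rewrite lt_def yn0 nm_ge0.
have hy' : M (((nm y)^-1%:C)%C *: y) by apply: subspZ.
have h1 : nm (((nm y)^-1%:C)%C *: y) <= 1.
  by rewrite nmZ1 ?(mulVf yn0) // invr_ge0 ltW.

have hS : S (nm (G (((nm y)^-1%:C)%C *: y))) by exists (((nm y)^-1%:C)%C *: y).
have := sup_upper_bound hs hS.
rewrite (linonZ _ hM hG hy) nmZ1; last by rewrite invr_ge0 ltW.
rewrite /opnorm_on -/S => h.
by rewrite -ler_pdivrMr // mulrC.
Qed.

Lemma opn_lub M G (k : R) : M 0 -> 0 <= k ->
  (forall y, M y -> nm (G y) <= k * nm y) -> opnorm_on ip M G <= k.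
Proof.
move=> h0 k0 hk; apply: ge_sup; first by exists (nm (G 0)); exists 0; split => //; rewrite (nm0 Hh).
move=> _ [z [hz hz1 ->]]; apply: le_trans (hk z hz) _.
by rewrite -[X in _ <= X]mulr1 ler_wpM2l.
Qed.

Lemma mk_inverse (M N : set V) (T : V -> V) (m : R) : lin T -> subsp M -> subsp N ->
  (forall x, M x -> N (T x)) -> 0 < m -> (forall x, M x -> m * nm x <= nm (T x)) ->
  (forall y, N y -> exists x, M x /\ T x = y) ->
  exists G, is_inverse_between ip M N T G.
Proof.
move=> hT hM hN hTMN m0 hlb hsurj.
have [G hG] : exists G : V -> V, forall y, N y -> M (G y) /\ T (G y) = y.
  have [f hf] := choice (P := fun y x => N y -> M x /\ T x = y) (fun y =>
    match pselect (N y) with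
    | left hy => let: ex_intro x hx := hsurj y hy in ex_intro _ x (fun _ => hx)
    | right hy => ex_intro _ 0 (fun h => False_ind _ (hy h))
    end).
  by exists f.
have inj : forall x x', M x -> M x' -> T x = T x' -> x = x'.
  move=> x x' hx hx' e; apply/eqP; rewrite -subr_eq0; apply/eqP; apply: (nm_eq0 Hh).
  apply/eqP; rewrite eq_le nm_ge0 andbT.
  have := hlb (x - x') (subspB hM hx hx'); rewrite (linB hT) e subrr (nm0 Hh) => h.
  by move: h; rewrite pmulr_rle0.
exists G; split.
- by move=> y /hG [].
- move=> a y z hy hz; apply: inj.
  + by apply: (proj1 (hG _ _)); apply: (proj2 hN).
  + by apply: (proj2 hM); [apply: (proj1 (hG _ hy))|apply: (proj1 (hG _ hz))].
  + rewrite (proj2 (hG _ _)); last by apply: (proj2 hN).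
    by rewrite hT (proj2 (hG _ hy)) (proj2 (hG _ hz)).
- exists m^-1 => y hy; have [h1 h2] := hG y hy.
  have := hlb _ h1; rewrite h2 => h.
  by rewrite mulrC ler_pdivlMr // mulrC.
- move=> x hx; apply: inj => //; first exact: (proj1 (hG _ (hTMN _ hx))).
  exact: (proj2 (hG _ (hTMN _ hx))).
- by move=> y /hG [].
Qed.
End Gen.

Lemma subACA (W : zmodType) (x y z t : W) : (x - y) - (z - t) = (x - z) - (y - t).
Proof. by rewrite !opprB addrACA [in RHS]addrACA (addrC (- z)). Qed.

Section Gen2.
Variables (R : realType) (V : lmodType R[i]) (ip : V -> V -> R[i]).
Hypothesis Hh : is_hilbert ip.
Local Notation nm := (hnorm ip).
Lemma opn_ge0 M G (C : R) : M 0 -> (forall y, M y -> nm (G y) <= C * nm y) ->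
  0 <= opnorm_on ip M G.
Proof.
move=> h0 hC.
set S := [set r | exists y, [/\ M y, nm y <= 1 & r = nm (G y)]].
have hs : has_sup S.
  split; first by exists (nm (G 0)); exists 0; split => //; rewrite (nm0 Hh).
  exists `|C| => _ [z [hz hz1 ->]].
  apply: le_trans (hC z hz) _.
  apply: le_trans (ler_wpM2r (nm_ge0 _ _) (ler_norm C)) _.
  by rewrite -[X in _ <= X]mulr1 ler_wpM2l.
have hS : S (nm (G 0)) by exists 0; split => //; rewrite (nm0 Hh).
exact: le_trans (nm_ge0 _ _) (sup_upper_bound hs hS).
Qed.
End Gen2.

Section LinC.
Variables (R : realType) (V : lmodType R[i]).
Lemma lin_sub (T1 T2 : V -> V) : lin T1 -> lin T2 -> lin (fun x => T1 x - T2 x).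
Proof. by move=> h1 h2 a x y; rewrite h1 h2 scalerBr opprD addrACA. Qed.
Lemma lin_add (T1 T2 : V -> V) : lin T1 -> lin T2 -> lin (fun x => T1 x + T2 x).
Proof. by move=> h1 h2 a x y; rewrite h1 h2 scalerDr addrACA. Qed.
Lemma lin_comp (T1 T2 : V -> V) : lin T1 -> lin T2 -> lin (fun x => T1 (T2 x)).
Proof. by move=> h1 h2 a x y; rewrite h2 h1. Qed.
Lemma lin_id : lin (fun x : V => x).
Proof. by []. Qed.
End LinC.

Lemma zid (W : zmodType) (a b p q u : W) : (a - p - (q - b)) + (p + q - (a + b - u)) = u.
Proof.
have c1 : a - p - (q - b) = (a + b) - (p + q) by rewrite opprB addrACA opprD.
have c2 : p + q - (a + b - u) = (p + q - (a + b)) + u by rewrite opprB (addrC u) addrA.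
rewrite c1 c2; set s1 := a + b; set s2 := p + q.
by rewrite addrA -(addrA s1) addKr subrr add0r.
Qed.
Section OM.
Variables (R : realType) (V : lmodType R[i]) (ip : V -> V -> R[i]).
Hypothesis Hh : is_hilbert ip.
Local Notation nm := (hnorm ip).
Local Notation cvg := (cvgV ip).
Definition closedS (A : set V) := forall u l, (forall n, A (u n)) -> cvg u l -> A l.

Lemma cvg_shiftk u l k : cvg u l -> cvg (fun n => u (k + n)%N) l.
Proof.
move=> h e e0; have [N hN] := h e e0; exists N => n hn; apply: hN.
exact: leq_trans hn (leq_addl _ _).
Qed.

Lemma baire_step (X Y : set V) (T : V -> V) : subsp Y -> closedS Y ->
  (forall y, Y y -> exists x, X x /\ T x = y) ->
  exists (k : nat) y0 r, [/\ Y y0, 0 < r & forall y, Y y -> nm (y - y0) < r ->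
    forall e, 0 < e -> exists x, X x /\ nm x <= k%:R /\ nm (y - T x) < e].
Proof.
move=> sY cY surj; apply: contrapT => nB.
have step : forall p : nat * V * R, exists q : V * R, Y p.1.2 -> 0 < p.2 ->
    [/\ Y q.1, nm (q.1 - p.1.2) < p.2, 0 < q.2 &
      forall x, X x -> nm x <= p.1.1%:R -> q.2 <= nm (q.1 - T x)].
  move=> [[k y0] r] /=.
  case: (pselect (Y y0 /\ 0 < r)) => [[hy0 hr]|h]; last first.
    by exists (0, 0) => a b; case: h.
  have : ~ (forall y, Y y -> nm (y - y0) < r ->
    forall e, 0 < e -> exists x, X x /\ nm x <= k%:R /\ nm (y - T x) < e).
    by move=> H; apply: nB; exists k, y0, r; split.
  move=> /existsNP [y /not_implyP [hy /not_implyP [hyr /existsNP [e /not_implyP [e0 /forallNP hx]]]]].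
  exists (y, e) => _ _; split => // x hxX hxk.
  rewrite leNgt; apply/negP => hlt; apply: (hx x); split => //.
have [f hf] := choice step.
pose sq := fix sq n := match n with
  | 0 => ((0 : V), (1 : R))
  | n'.+1 => ((f (n', (sq n').1, (sq n').2 / 2)).1,
              Num.min ((sq n').2 / 2) ((f (n', (sq n').1, (sq n').2 / 2)).2 / 2))
  end.
pose y n := (sq n).1; pose r n := (sq n).2.
have inv : forall n, [/\ Y (y n), 0 < r n & r n <= (2^-1) ^+ n].
  elim=> [|n [hy hr hr2]]; first by rewrite /y /r /= expr0; split => //; case: sY.
  have [h1 h2 h3 h4] := hf (n, y n, r n / 2) hy (divr_gt0 hr (ltr0Sn _ 1)).
  rewrite /y /r /= -/(y n) -/(r n); split => //.
  - by rewrite lt_min divr_gt0 //= divr_gt0.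
  - rewrite ge_min; apply/orP; left.
    by rewrite exprS mulrC; apply: ler_wpM2l => //; rewrite invr_ge0.
have hstep : forall n, nm (y n.+1 - y n) < r n / 2 /\ r n.+1 <= r n / 2 /\
    forall x, X x -> nm x <= n%:R -> r n.+1 * 2 <= nm (y n.+1 - T x).
  move=> n; have [hy hr _] := inv n.
  have [h1 h2 h3 h4] := hf (n, y n, r n / 2) hy (divr_gt0 hr (ltr0Sn _ 1)).
  rewrite /y /r /= -/(y n) -/(r n); split => //; split; first by rewrite ge_min lexx.
  move=> x hx hxn; apply: le_trans (h4 x hx hxn).
  by rewrite -ler_pdivlMr // ge_min lexx orbT.
have nest : forall n m, nm (y (n + m)%N - y n) + r (n + m)%N <= r n.
  move=> n; elim=> [|m IH]; first by rewrite addn0 subrr (nm0 Hh) add0r.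
  rewrite addnS; have [a [b _]] := hstep (n + m)%N.
  apply: le_trans (lerD (nm_tri3 Hh _ (y (n + m)%N) _) (lexx _)) _.
  lra.
have hc : forall n, nm (y n.+1 - y n) <= 1 * (2^-1) ^+ n.
  move=> n; have [a _] := hstep n; have [_ hr hr2] := inv n.
  rewrite mul1r; apply: le_trans hr2; lra.
have h2 : 0 <= (2^-1 : R) < 1 by apply/andP; split; lra.
have [l hl] := cauchy_geom Hh ler01 h2 hc.
have Yl : Y l by apply: cY hl => n; case: (inv n).
have [x [hx Tx]] := surj l Yl.
pose n := (Num.truncn (nm x)).+1.
have hxn : nm x <= n%:R by apply: ltW; apply: truncnS_gt.
have dl : nm (l - y n.+1) <= r n.+1.
  apply: (cvg_nm_le Hh (u := fun m => y (n.+1 + m)%N - y n.+1)).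
  - exact: cvg_subr (cvg_shiftk _ hl).
  - move=> m /=; have := nest n.+1 m; have [_ hr _] := inv (n.+1 + m)%N; lra.
have [_ [_ h3]] := hstep n.
have := h3 x hx hxn; rewrite Tx (nmBC Hh).
have := inv n.+1 => -[_ hr _].
lra.
Qed.

Lemma rcM (a b : R) : ((a%:C)%C * (b%:C)%C) = ((a * b)%:C)%C :> R[i].
Proof. by apply/eqP; rewrite eq_complex /= !mulr0 !mul0r subr0 addr0 !eqxx. Qed.
Lemma rc1 : (((1 : R)%:C)%C) = 1 :> R[i].
Proof. by []. Qed.
Lemma rcK (t : R) (v : V) : t != 0 -> ((t^-1%:C)%C *: ((t%:C)%C *: v)) = v.
Proof. by move=> t0; rewrite scalerA rcM mulVf // rc1 scale1r. Qed.

Lemma nm_subtri a b : nm (a - b) <= nm a + nm b.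
Proof. by have := nm_triangle Hh a (- b); rewrite (nmN Hh). Qed.

Lemma approx_step (X Y : set V) (T : V -> V) : subsp X -> subsp Y -> closedS Y -> lin T ->
  (forall y, Y y -> exists x, X x /\ T x = y) ->
  exists L : R, 0 <= L /\ forall y, Y y -> forall e, 0 < e ->
    exists x, X x /\ nm x <= L * nm y /\ nm (y - T x) < e.
Proof.
move=> sX sY cY lT surj.
have [k [y0 [r [hy0 hr hB]]]] := baire_step sY cY surj.
exists (4 * k%:R / r); split; first by rewrite divr_ge0 ?mulr_ge0 // ltW.
move=> y hy e e0.
have [y0n|yn0] := eqVneq (nm y) 0.
  exists 0; split; first exact: (proj1 sX).
  rewrite (nm0 Hh) y0n mulr0 lexx (nm_eq0 Hh y0n) (lin0 lT) subr0 (nm0 Hh); split => //.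
have yp : 0 < nm y by rewrite lt_def yn0 nm_ge0.
set t := r / (2 * nm y).
have tp : 0 < t by rewrite divr_gt0 // mulr_gt0.
set y' := (t%:C)%C *: y.
have ny' : nm y' = r / 2.
  rewrite /y' (nmZ1 Hh _ (ltW tp)) /t; field; exact: yn0.
have hy' : Y (y0 + y') by apply: subspD => //; apply: subspZ.
have h1 : nm (y0 + y' - y0) < r by rewrite (addrC y0) addrK ny'; lra.
set e' := e * t / 2.
have e'p : 0 < e' by rewrite divr_gt0 // mulr_gt0.
have [x1 [hx1 [hx1k hx1e]]] := hB _ hy' h1 e' e'p.
have h0 : nm (y0 - y0) < r by rewrite subrr (nm0 Hh).
have [x2 [hx2 [hx2k hx2e]]] := hB _ hy0 h0 e' e'p.
exists ((t^-1%:C)%C *: (x1 - x2)); split.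
  by apply: subspZ => //; apply: subspB.
have tn0 : t != 0 by apply: lt0r_neq0.
have tip : 0 < t^-1 by rewrite invr_gt0.
split.
  rewrite (nmZ1 Hh _ (ltW tip)).
  have : nm (x1 - x2) <= 2 * k%:R.
    apply: le_trans (nm_subtri x1 x2) _.
    by rewrite mulr_natl mulr2n; apply: lerD.
  move=> h; apply: le_trans (ler_wpM2l (ltW tip) h) _.
  rewrite le_eqVlt; apply/orP; left; apply/eqP.
  rewrite /t; field; rewrite yn0 (lt0r_neq0 hr) //.
have ey : y = (t^-1%:C)%C *: y' by rewrite /y' rcK.
rewrite {1}ey (linZ lT) (linB lT) -scalerBr (nmZ1 Hh _ (ltW tip)).
have e2 : y' - (T x1 - T x2) = (y0 + y' - T x1) - (y0 - T x2).
  by rewrite subACA (addrC y0) addrK.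
rewrite e2.
have h3 : nm (y0 + y' - T x1 - (y0 - T x2)) < e * t.
  apply: le_lt_trans (nm_subtri _ _) _.
  have : e' + e' = e * t by rewrite /e'; field.
  lra.
rewrite -ltr_pdivlMl // ?invr_gt0 // invrK mulrC //.
Qed.

Lemma open_map_lite (X Y : set V) (T : V -> V) (K : R) :
  subsp X -> closedS X -> subsp Y -> closedS Y -> lin T ->
  (forall x, nm (T x) <= K * nm x) ->
  (forall x, X x -> Y (T x)) -> (forall y, Y y -> exists x, X x /\ T x = y) ->
  (forall x, X x -> T x = 0 -> x = 0) ->
  exists C, forall x, X x -> nm x <= C * nm (T x).
Proof.
move=> sX cX sY cY lT bT maps surj inj.
have [L [L0 hL]] := approx_step sX sY cY lT surj.
have [g0 hg0] := choice (P := fun (p : V * R) (x : V) => Y p.1 -> 0 < p.2 ->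
   X x /\ nm x <= L * nm p.1 /\ nm (p.1 - T x) < p.2)
  (fun p => match pselect (Y p.1 /\ 0 < p.2) with
    | left h => let: ex_intro x hx := hL p.1 (proj1 h) p.2 (proj2 h) in ex_intro _ x (fun _ _ => hx)
    | right h => ex_intro _ 0 (fun a b => False_ind _ (h (conj a b)))
    end).
pose g y e := g0 (y, e).
have hg : forall y e, Y y -> 0 < e -> X (g y e) /\ nm (g y e) <= L * nm y /\ nm (y - T (g y e)) < e.
  by move=> y e hy he; apply: (hg0 (y, e)).
exists (2 * L) => x hx.
set y := T x; have hy : Y y := maps x hx.
have [y0|yn0] := eqVneq (nm y) 0.
  by rewrite (inj x hx (nm_eq0 Hh y0)) (nm0 Hh) y0 mulr0.
have yp : 0 < nm y by rewrite lt_def yn0 nm_ge0.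
pose h := (2^-1 : R).
have h0 : 0 < h by rewrite invr_gt0.
have h2 : 0 <= h < 1 by apply/andP; split; rewrite /h; lra.
pose z := fix z n := match n with 0 => y | n'.+1 => z n' - T (g (z n') (nm y * h ^+ n'.+1)) end.
pose xs n := g (z n) (nm y * h ^+ n.+1).
have zS n : z n.+1 = z n - T (xs n) by [].
have epos n : 0 < nm y * h ^+ n by rewrite mulr_gt0 // exprn_gt0.
have hz : forall n, Y (z n) /\ nm (z n) <= nm y * h ^+ n.
  elim=> [|n [IH1 IH2]]; first by rewrite expr0 mulr1; split.
  have [a [b c]] := hg (z n) _ IH1 (epos n.+1).
  rewrite zS; split; first by apply: subspB => //; apply: maps.
  exact: ltW.
have hxs : forall n, X (xs n) /\ nm (xs n) <= L * nm y * h ^+ n.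
  move=> n; have [Y1 Y2] := hz n.
  have [a [b c]] := hg (z n) _ Y1 (epos n.+1).
  split => //; apply: le_trans b _; rewrite -mulrA; exact: ler_wpM2l.
pose S := fix S n := match n with 0 => 0 | n'.+1 => S n' + xs n' end.
have SS n : S n.+1 = S n + xs n by [].
have SX : forall n, X (S n).
  elim=> [|n IH]; first exact: (proj1 sX).
  by rewrite SS; apply: subspD => //; case: (hxs n).
have TS : forall n, T (S n) = y - z n.
  elim=> [|n IH]; first by rewrite /= (lin0 lT) subrr.
  by rewrite SS zS (linD lT) IH opprB addrA addrAC.
have Sd : forall n, nm (S n.+1 - S n) <= (L * nm y) * h ^+ n.
  by move=> n; rewrite SS addrAC subrr add0r; case: (hxs n).
have [s hs] := cauchy_geom Hh (mulr_ge0 L0 (nm_ge0 _ _)) h2 Sd.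
have Xs : X s by apply: cX hs.
have c1 : cvgV ip (fun n => T (S n)) (T s) by apply: (cvg_bnd lT bT hs).
have c2 : cvgV ip (fun n => T (S n)) y.
  move=> e e0.
  have [N hN] := pow_small h2 (divr_gt0 e0 yp).
  exists N => n hn; rewrite TS addrAC subrr add0r (nmN Hh).
  apply: le_lt_trans (proj2 (hz n)) _.
  have : h ^+ n <= h ^+ N by apply: ler_wiXn2l => //; [exact: ltW|case/andP: h2 => _ /ltW].
  move=> hh; apply: le_lt_trans (ler_wpM2l (nm_ge0 _ _) hh) _.
  by rewrite mulrC -ltr_pdivlMr.
have Ts : T s = y by apply: (cvg_uniq Hh c1 c2).
have Snm : forall n, nm (S n) + 2 * (L * nm y * h ^+ n) <= 2 * (L * nm y).
  elim=> [|n IH]; first by rewrite /= (nm0 Hh) add0r expr0 mulr1.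
  rewrite SS; have [_ hb] := hxs n.
  have e : L * nm y * h ^+ n.+1 = (L * nm y * h ^+ n) / 2 by rewrite exprS /h; field.
  have := nm_triangle Hh (S n) (xs n); rewrite e; lra.
have hsb : nm s <= 2 * (L * nm y).
  apply: (cvg_nm_le Hh hs) => n; have := Snm n.
  have : 0 <= L * nm y * h ^+ n by rewrite mulr_ge0 ?mulr_ge0 ?nm_ge0 ?exprn_ge0 // ltW.
  lra.
have xs_eq : x = s.
  apply/eqP; rewrite -subr_eq0; apply/eqP; apply: inj; first exact: subspB.
  by rewrite (linB lT) Ts subrr.
by rewrite xs_eq -mulrA.
Qed.
End OM.
Section Main.
Variables (R : realType) (V : lmodType R[i]) (ip : V -> V -> R[i]).
Hypothesis Hh : is_hilbert ip.
Local Notation nm := (hnorm ip).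
Local Notation cvg := (cvgV ip).
Local Notation Re := complex.Re.
Variables (E F P : V -> V).
Hypotheses (hE : is_projection ip E) (hF : is_projection ip F) (hP : is_join ip E F P).

Let hPp : is_projection ip P := proj1 hP.
Let lE := pr_lin hE.
Let lF := pr_lin hF.
Let lP := pr_lin hPp.

Lemma inS_P y : (exists a b, y = E a + F b) -> P y = y.
Proof.
move=> hy; have : range P y.
  rewrite (proj2 hP) => e e0; exists y; split => //.
  by rewrite subrr (nm0 Hh).
by case=> x _ <-; rewrite (pr_idem hPp).
Qed.
Lemma PE x : P (E x) = E x.
Proof. by apply: inS_P; exists x, 0; rewrite (lin0 lF) addr0. Qed.
Lemma PF x : P (F x) = F x.
Proof. by apply: inS_P; exists 0, x; rewrite (lin0 lE) add0r. Qed.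
Lemma FP x : F (P x) = F x.
Proof.
apply: (ip_ext Hh) => z.
by rewrite (pr_sa hF) (pr_sa hPp) PF -(pr_sa hF).
Qed.
Lemma EP x : E (P x) = E x.
Proof.
apply: (ip_ext Hh) => z.
by rewrite (pr_sa hE) (pr_sa hPp) PE -(pr_sa hE).
Qed.
Lemma PH_approx u : P u = u -> forall e, 0 < e -> exists a b, nm (u - (E a + F b)) < e.
Proof.
move=> hu e e0.
have : range P u by exists u.
rewrite (proj2 hP) => /(_ e e0) [z [[a [b ->]] h]].
by exists a, b.
Qed.

Local Notation c := (opnorm ip (fun x => E (F x))).

Lemma EF_lin : linon setT (fun x => E (F x)).
Proof. by move=> a y z _ _ /=; rewrite lF lE. Qed.
Lemma EF_bnd x : nm (E (F x)) <= 1 * nm x.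
Proof. by rewrite mul1r; apply: le_trans (pr_contr Hh hE _) (pr_contr Hh hF _). Qed.

Lemma c_ub x : nm (E (F x)) <= c * nm x.
Proof.
apply: (opn_ub Hh (M := setT) (G := fun x => E (F x)) (C := 1) _ _ _ (y := x)).
- by split.
- exact: EF_lin.
- by move=> y _; apply: EF_bnd.
- by [].
Qed.
Lemma c_ge0 : 0 <= c.
Proof. exact: (opn_ge0 Hh (M := setT) (G := fun x => E (F x)) (C := 1) I (fun y _ => EF_bnd y)). Qed.
Lemma c_lub k : 0 <= k -> (forall x, nm (E (F x)) <= k * nm x) -> c <= k.
Proof. by move=> k0 h; apply: (opn_lub Hh) => // y _; apply: h. Qed.
Lemma c_le1 : c <= 1.
Proof. by apply: c_lub => //; apply: EF_bnd. Qed.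

Lemma FE_bnd w : E w = w -> nm (F w) <= c * nm w.
Proof.
move=> hw.
have h1 : nm (F w) ^+ 2 <= c * nm (F w) * nm w.
  rewrite -(pr_ReE Hh hF) -{2}hw -(pr_sa hE) -{1}(pr_idem hF w).
  apply: le_trans (CS Hh _ _) _.
  by rewrite ler_wpM2r ?nm_ge0 // c_ub.
have [a0|an0] := eqVneq (nm (F w)) 0.
  by rewrite a0 mulr_ge0 ?c_ge0 ?nm_ge0.
have ap : 0 < nm (F w) by rewrite lt_def an0 nm_ge0.
by rewrite expr2 mulrAC ler_pM2r in h1.
Qed.

Lemma adj_bound t : 0 <= t -> (forall w, E w = w -> nm (F w) <= t * nm w) -> c <= t.
Proof.
move=> t0 h; apply: c_lub => // y.
set w := E (F y).
have hw : E w = w by rewrite /w (pr_idem hE).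
have h1 : nm w ^+ 2 <= t * nm w * nm y.
  rewrite (nm_sq Hh) {1}/w (pr_sa hE) hw (pr_sa hF) (ReipC Hh).
  apply: le_trans (CS Hh _ _) _.
  by rewrite ler_wpM2r ?nm_ge0 // h.
have [a0|an0] := eqVneq (nm w) 0.
  by rewrite a0 mulr_ge0 ?nm_ge0.
have ap : 0 < nm w by rewrite lt_def an0 nm_ge0.
have : nm w * nm w <= (t * nm y) * nm w by rewrite -expr2 mulrAC.
by rewrite ler_pM2r.
Qed.

Lemma EH_T x : E x = x -> nm (x - F x) ^+ 2 = nm x ^+ 2 - nm (F x) ^+ 2.
Proof. by move=> _; rewrite (pr_pyth Hh hF x) addrAC subrr add0r. Qed.

Lemma EH_lb x : E x = x -> (1 - c ^+ 2) * nm x ^+ 2 <= nm (x - F x) ^+ 2.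
Proof.
move=> hx; rewrite EH_T //.
have := FE_bnd hx; have := nm_ge0 ip (F x); have := nm_ge0 ip x; have := c_ge0.
nra.
Qed.

Local Notation s := (Num.sqrt (1 - c ^+ 2)).

Lemma s_sq : s ^+ 2 = 1 - c ^+ 2.
Proof. rewrite sqr_sqrtr //; have := c_le1; have := c_ge0; nra. Qed.
Lemma s_ge0 : 0 <= s.
Proof. exact: sqrtr_ge0. Qed.
Lemma s_le1 : s <= 1.
Proof. apply: sq_le => //; rewrite s_sq expr1n; have := c_ge0; nra. Qed.

Lemma arithD (c A B W Ew : R) : 0 <= c -> c <= 1 -> 0 <= Ew -> 0 <= B -> 0 <= W -> 0 <= A ->
  A ^+ 2 = W ^+ 2 - Ew ^+ 2 -> Ew <= c * W -> A ^+ 2 <= B * W -> (1 - c ^+ 2) * A ^+ 2 <= B ^+ 2.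
Proof.
move=> c0 c1 hEw hB hW hA A1 A2 A3.
have m0 : 0 <= 1 - c ^+ 2 by nra.
have h3 : Ew ^+ 2 <= (c * W) ^+ 2 by rewrite ler_pXn2r // ?nnegrE // mulr_ge0.
have h4 : (1 - c ^+ 2) * W ^+ 2 <= A ^+ 2 by rewrite A1; rewrite exprMn in h3; nra.
have h5 : (1 - c ^+ 2) * W <= B.
  have [W0|Wp] := eqVneq W 0; first by rewrite W0 mulr0.
  have Wp' : 0 < W by rewrite lt_def Wp hW.
  have : (1 - c ^+ 2) * W * W <= B * W by nra.
  by rewrite ler_pM2r.
have h6 : (1 - c ^+ 2) * A ^+ 2 <= (1 - c ^+ 2) * (B * W) by rewrite ler_wpM2l.
have h7 : (1 - c ^+ 2) * (B * W) <= B * B.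
  by rewrite mulrA (mulrC _ B) -mulrA ler_wpM2l.
by rewrite expr2; apply: le_trans h6 h7.
Qed.

Lemma Dlem v : s * nm (F v - E (F v)) <= nm (F (F v - E (F v))).
Proof.
set w := F v; have Fw : F w = w by rewrite /w (pr_idem hF).
set z := w - E w.
have A1 : nm z ^+ 2 = nm w ^+ 2 - nm (E w) ^+ 2.
  by rewrite (pr_pyth Hh hE w) addrAC subrr add0r.
have A2 : nm (E w) <= c * nm w by rewrite -{1}Fw c_ub.
have A3 : nm z ^+ 2 <= nm (F z) * nm w.
  have e : ip (F z) w = ip z w by rewrite (pr_sa hF) Fw.
  have e2 : ip z z = ip z w by rewrite {2}/z (ipBr Hh) (pr_orth' Hh hE) subr0.
  by rewrite (nm_sq Hh) e2 -e; apply: CS.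
apply: sq_le; first exact: nm_ge0.
rewrite exprMn s_sq.
exact: arithD c_ge0 c_le1 (nm_ge0 _ _) (nm_ge0 _ _) (nm_ge0 _ _) (nm_ge0 _ _) A1 A2 A3.
Qed.

Lemma kerE_lb u : P u = u -> s * nm (u - E u) <= nm (F (u - E u)).
Proof.
move=> hu; rewrite -subr_le0; apply: le0_small => e e0.
have e2 : 0 < e / 2 by rewrite divr_gt0.
have [a [b hab]] := PH_approx hu e2.
set y := E a + F b.
have hy : y - E y = F b - E (F b).
  by rewrite /y (linD lE) (pr_idem hE) opprD addrACA subrr add0r.
have D := Dlem b; rewrite -hy in D.
set z := u - E u; set z2 := y - E y.
have hzz : nm (z - z2) <= nm (u - y).
  rewrite /z /z2 subACA -(linB lE).
  have := pr_pyth Hh hE (u - y).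
  move=> h; apply: sq_le; first exact: nm_ge0.
  by rewrite h lerDr exprn_ge0 // nm_ge0.
have t1 : nm z <= nm z2 + nm (z - z2).
  by have := nm_triangle Hh z2 (z - z2); rewrite addrC subrK.
have t2 : nm (F z2) <= nm (F z) + nm (z2 - z).
  have := nm_triangle Hh (F z) (F (z2 - z)); rewrite -(linD lF) addrC subrK => hh.
  by apply: le_trans hh _; rewrite lerD2l (pr_contr Hh hF).
rewrite (nmBC Hh z2) in t2.
have := s_ge0; have := s_le1; have := nm_ge0 ip (z - z2).
move=> h0 h1 h2.
have h3 : nm (z - z2) <= e / 2 by apply: le_trans hzz (ltW hab).
nra.
Qed.

Lemma PH_lb u : P u = u -> (1 - c ^+ 2) * nm u ^+ 2 <= nm (E u - F u) ^+ 2.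
Proof.
move=> hu.
set p := E u - F (E u); set r := F (u - E u).
have e1 : E u - F u = p - r by rewrite /p /r (linB lF) opprB addrA subrK.
have o : Re (ip p r) = 0.
  by rewrite /r -(pr_sa hF) /p (linB lF) (pr_idem hF) subrr (ip0l Hh).
rewrite e1 (nmB2 Hh) o mulr0 subr0.
have hp : (1 - c ^+ 2) * nm (E u) ^+ 2 <= nm p ^+ 2.
  by apply: EH_lb; rewrite (pr_idem hE).
have hr : s * nm (u - E u) <= nm r by apply: kerE_lb.
have hr2 : (1 - c ^+ 2) * nm (u - E u) ^+ 2 <= nm r ^+ 2.
  by rewrite -s_sq -exprMn ler_pXn2r // ?nnegrE ?mulr_ge0 ?s_ge0 ?nm_ge0.
rewrite (pr_pyth Hh hE u); nra.
Qed.


Definition Aop u := E u - F u.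
Definition Bop u := E u + F u - u.
Lemma lA : lin Aop. Proof. exact: lin_sub lE lF. Qed.
Lemma lB : lin Bop. Proof. exact: lin_sub (lin_add lE lF) (@lin_id _ _). Qed.
Lemma lBB : lin (fun x => Bop (Bop x)). Proof. exact: lin_comp lB lB. Qed.

Lemma AA_BB u : Aop (Aop u) + Bop (Bop u) = u.
Proof.
rewrite /Aop /Bop (linB lE) (linB lF) !(pr_idem hE) !(pr_idem hF).
rewrite (linB lE) (linB lF) !(linD lE) !(linD lF) !(pr_idem hE) !(pr_idem hF).
rewrite (addrC (E u) (E (F u))) !addrK.
exact: zid.
Qed.

Lemma A_sa x y : ip (Aop x) y = ip x (Aop y).
Proof. by rewrite /Aop (ipBl Hh) (ipBr Hh) (pr_sa hE) (pr_sa hF). Qed.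
Lemma B_sa x y : ip (Bop x) y = ip x (Bop y).
Proof. by rewrite /Bop (ipBl Hh) (ipBr Hh) (ipDl Hh) (ipDr Hh) (pr_sa hE) (pr_sa hF). Qed.

Lemma nA_nB u : nm (Aop u) ^+ 2 + nm (Bop u) ^+ 2 = nm u ^+ 2.
Proof.
by rewrite !(nm_sq Hh) -ReD (A_sa u) (B_sa u) -(ipDr Hh) AA_BB.
Qed.


Lemma PA u : P u = u -> P (Aop u) = Aop u.
Proof. by move=> hu; rewrite /Aop (linB lP) PE PF. Qed.
Lemma PB u : P u = u -> P (Bop u) = Bop u.
Proof. by move=> hu; rewrite /Bop (linB lP) (linD lP) PE PF hu. Qed.

Lemma A_lb u : P u = u -> s * nm u <= nm (Aop u).
Proof.
move=> hu; apply: sq_le; first exact: nm_ge0.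
by rewrite exprMn s_sq; apply: PH_lb.
Qed.

Lemma B_bnd u : P u = u -> nm (Bop u) <= c * nm u.
Proof.
move=> hu; apply: sq_le; first by rewrite mulr_ge0 ?c_ge0 ?nm_ge0.
have h1 := nA_nB u; have h2 := PH_lb hu; rewrite exprMn.
rewrite /Aop in h1; nra.
Qed.

Lemma BB_bnd u : P u = u -> nm (Bop (Bop u)) <= c ^+ 2 * nm u.
Proof.
move=> hu; apply: le_trans (B_bnd (PB hu)) _.
rewrite expr2 -mulrA ler_wpM2l ?c_ge0 //; exact: B_bnd.
Qed.

Lemma B_glob x : nm (Bop x) <= 3 * nm x.
Proof.
rewrite /Bop; apply: le_trans (nm_triangle Hh _ _) _.
rewrite (nmN Hh); apply: le_trans (lerD (nm_triangle Hh _ _) (lexx _)) _.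
have := pr_contr Hh hE x; have := pr_contr Hh hF x. lra.
Qed.
Lemma BB_glob x : nm (Bop (Bop x)) <= 9 * nm x.
Proof.
apply: le_trans (B_glob _) _.
have := B_glob x; have := nm_ge0 ip x. lra.
Qed.

Lemma A_surj : c < 1 -> forall y, P y = y -> exists t, P t = t /\ Aop t = y.
Proof.
move=> c1 y hy.
pose x := fix x n := match n with 0 => 0 | n'.+1 => y + Bop (Bop (x n')) end.
have xS n : x n.+1 = y + Bop (Bop (x n)) by [].
have xP n : P (x n) = x n.
  elim: n => [|n IH]; first by rewrite /= (lin0 lP).
  by rewrite xS (linD lP) hy PB ?PB.
have dP n : P (x n.+1 - x n) = x n.+1 - x n by rewrite (linB lP) !xP.
have hd : forall n, nm (x n.+1 - x n) <= nm y * (c ^+ 2) ^+ n.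
  elim=> [|n IH]; first by rewrite /= expr0 mulr1 subr0 (lin0 lBB) addr0.
  rewrite xS [x n.+1]xS opprD addrACA subrr add0r -(linB lBB).
  apply: le_trans (BB_bnd (dP n)) _.
  by rewrite [_ ^+ n.+1]exprS mulrCA ler_wpM2l // exprn_ge0 // c_ge0.
have c2 : 0 <= c ^+ 2 < 1.
  rewrite exprn_ge0 ?c_ge0 //= expr2; have := c_ge0; nra.
have [l hl] := cauchy_geom Hh (nm_ge0 ip y) c2 hd.
have Pl : P l = l by apply: (cvg_proj Hh hPp xP hl).
have h1 : cvgV ip (fun n => y + Bop (Bop (x n))) (y + Bop (Bop l)).
  by apply: cvg_addl; exact: (cvg_bnd lBB BB_glob hl).
have h2 : cvgV ip (fun n => y + Bop (Bop (x n))) l.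
  by have := cvg_shift hl.
have el : l = y + Bop (Bop l) by apply: (cvg_uniq Hh h2 h1).
exists (Aop l); split; first by apply: PA.
by apply: (addIr (Bop (Bop l))); rewrite AA_BB.
Qed.


Lemma pr_range (T : V -> V) y : is_projection ip T -> (range T y <-> T y = y).
Proof.
move=> hT; split; first by case=> x _ <-; rewrite (pr_idem hT).
by move=> h; exists y.
Qed.

Lemma s_gt0 : c < 1 -> 0 < s.
Proof. move=> c1; rewrite sqrtr_gt0; have := c_ge0; nra. Qed.

Lemma le_divl (t a b : R) : 0 < t -> t * a <= b -> a <= t^-1 * b.
Proof.
move=> t0 h; rewrite -(ler_pM2l t0) mulrA mulfV ?mul1r //; exact: lt0r_neq0.
Qed.

Lemma c_sq_bound K : 1 <= K -> (forall x, E x = x -> nm x <= K * nm (x - F x)) ->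
  c ^+ 2 <= 1 - (K ^+ 2)^-1.
Proof.
move=> K1 hK.
have K0 : 0 < K by apply: lt_le_trans K1; exact: ltr01.
have K2 : 1 <= K ^+ 2 by rewrite exprn_ege1.
set t := 1 - (K ^+ 2)^-1.
have t0 : 0 <= t by rewrite subr_ge0 invf_le1 // exprn_gt0.
have hb : forall w, E w = w -> nm (F w) <= Num.sqrt t * nm w.
  move=> w hw; apply: sq_le; first by rewrite mulr_ge0 ?sqrtr_ge0 ?nm_ge0.
  rewrite exprMn (sqr_sqrtr t0).
  have h1 := hK w hw; have h2 := EH_T hw.
  have h3 : nm w ^+ 2 <= K ^+ 2 * (nm w ^+ 2 - nm (F w) ^+ 2).
    rewrite -h2 -exprMn ler_pXn2r ?nnegrE ?mulr_ge0 ?nm_ge0 //; exact: ltW.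
  have h4 : nm w ^+ 2 / K ^+ 2 <= nm w ^+ 2 - nm (F w) ^+ 2.
    by rewrite ler_pdivrMr ?exprn_gt0 // mulrC.
  rewrite /t mulrBl mul1r (mulrC _ (nm w ^+ 2)); lra.
have hc := adj_bound (sqrtr_ge0 t) hb.
rewrite -(sqr_sqrtr t0) ler_pXn2r ?nnegrE ?c_ge0 ?sqrtr_ge0 //.
Qed.

Lemma c_lt1_of_bound : (exists C, forall x, E x = x -> nm x <= C * nm (x - F x)) -> c < 1.
Proof.
case=> C hC.
have hK : forall x, E x = x -> nm x <= (`|C| + 1) * nm (x - F x).
  move=> x hx; apply: le_trans (hC x hx) _; apply: ler_wpM2r; first exact: nm_ge0.
  by apply: le_trans (ler_norm C) _; rewrite lerDl.
have K1 : 1 <= `|C| + 1 by rewrite lerDr normr_ge0.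
have := c_sq_bound K1 hK.
have : 0 < ((`|C| + 1) ^+ 2)^-1 by rewrite invr_gt0 exprn_gt0 //; apply: lt_le_trans K1; exact: ltr01.
have := c_ge0. nra.
Qed.

Lemma c_lt1_of_2 : invertible_between ip (range P) (range P) (fun x => E x - F x) -> c < 1.
Proof.
case=> hmaps [G [hGM hGlin [C hC] hleft hright]].
apply: c_lt1_of_bound; exists C => x hx.
have xP : range P x by apply/(pr_range _ hPp); rewrite -hx PE.
have := hC _ (hmaps _ xP); rewrite hleft // hx. done.
Qed.

Lemma c_lt1_of_3 : invertible_between ip (range E) (range (fun x => P x - F x))
  (fun x => P (E x) - F (E x)) -> c < 1.
Proof.
case=> hmaps [G [hGM hGlin [C hC] hleft hright]].
apply: c_lt1_of_bound; exists C => x hx.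
have xE : range E x by exists x.
have := hC _ (hmaps _ xE); rewrite hleft // hx.
by rewrite -{2}hx PE hx.
Qed.

Lemma inv2 : c < 1 -> invertible_between ip (range P) (range P) (fun x => E x - F x).
Proof.
move=> c1.
have maps : forall x, range P x -> range P (Aop x).
  by move=> x /(pr_range _ hPp) hx; apply/(pr_range _ hPp); apply: PA.
split; first exact: maps.
apply: (mk_inverse Hh (m := s) lA (range_subsp lP) (range_subsp lP) maps (s_gt0 c1)).
- by move=> x /(pr_range _ hPp) hx; apply: A_lb.
- move=> y /(pr_range _ hPp) hy; have [t [ht <-]] := A_surj c1 hy.
  by exists t; split => //; apply/(pr_range _ hPp).
Qed.

Lemma lPFE : lin (fun x => P (E x) - F (E x)).
Proof. exact: lin_sub (lin_comp lP lE) (lin_comp lF lE). Qed.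

Lemma inv3 : c < 1 -> invertible_between ip (range E) (range (fun x => P x - F x))
  (fun x => P (E x) - F (E x)).
Proof.
move=> c1.
have maps : forall x, range E x -> range (fun x => P x - F x) (P (E x) - F (E x)).
  by move=> x _; exists (E x).
split; first exact: maps.
apply: (mk_inverse Hh (m := s) lPFE (range_subsp lE) (range_subsp (lin_sub lP lF)) maps (s_gt0 c1)).
- move=> x /(pr_range _ hE) hx; rewrite PE hx.
  apply: sq_le; first exact: nm_ge0.
  by rewrite exprMn s_sq; apply: EH_lb.
- move=> _ [v _ <-].
  have [t [ht et]] := A_surj c1 (pr_idem hPp v).
  exists (E t); split; first by exists t.
  rewrite (pr_idem hE) PE -(FP v) -et /Aop (linB lF) (pr_idem hF).
  by rewrite opprB addrA subrK.
Qed.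

Lemma two_imp_one Q : is_meet ip E F Q ->
  invertible_between ip (range P) (range P) (fun x => E x - F x) ->
  (forall x, Q x = 0) /\ range P = [set y | exists a b, y = E a + F b].
Proof.
move=> hQ [hmaps [G [hGM hGlin hCb hleft hright]]].
have hPs := range_subsp lP.
split.
- move=> x; have : range Q (Q x) by exists x.
  rewrite (proj2 hQ) => -[/(pr_range _ hE) h1 /(pr_range _ hF) h2].
  have wP : range P (Q x) by apply/(pr_range _ hPp); rewrite -h1 PE.
  have := hleft _ wP; rewrite h1 h2 subrr (linon0 hPs hGlin); done.
- apply/seteqP; split => y hy.
  + have := hright _ hy => /= e; exists (G y), (- G y).
    by rewrite (linN lF); apply/esym.
  + by apply/(pr_range _ hPp); apply: inS_P.
Qed.

Lemma norm_id M N T G : c < 1 -> (exists x, E x != 0) -> subsp N ->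
  (forall x, M x -> N (T x)) -> is_inverse_between ip M N T G ->
  (forall x, M x -> s * nm x <= nm (T x)) ->
  (forall x, E x = x -> M x /\ T x = x - F x) ->
  opnorm_on ip N G = s^-1.
Proof.
move=> c1 [x0 hx0] hN hTN [hGM hGlin [C hC] hleft hright] hlb hEM.
have s0 := s_gt0 c1.
apply/eqP; rewrite eq_le; apply/andP; split.
  apply: (opn_lub Hh (proj1 hN)); first by rewrite invr_ge0 ltW.
  move=> y hy; apply: le_divl => //.
  by have := hlb _ (hGM _ hy); rewrite hright.
set g := opnorm_on ip N G.
have hub := opn_ub Hh hN hGlin hC.
have hK : forall x, E x = x -> nm x <= g * nm (x - F x).
  move=> x hx; have [Mx Tx] := hEM x hx.
  have := hub _ (hTN _ Mx); rewrite hleft // Tx. done.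
set x1 := E x0.
have hx1 : E x1 = x1 by rewrite /x1 (pr_idem hE).
have n1 : 0 < nm x1.
  rewrite lt_def nm_ge0 andbT; apply/eqP => h; move: hx0; rewrite -/x1 (nm_eq0 Hh h) eqxx. done.
have h1 : nm (x1 - F x1) <= nm x1.
  apply: sq_le; first exact: nm_ge0.
  by rewrite EH_T // lerBlDr lerDl exprn_ge0 // nm_ge0.
have h2 := hK _ hx1.
have y0 := nm_ge0 ip (x1 - F x1).
have g0 : 0 <= g by nra.
have h3 : nm x1 <= g * nm x1 by apply: le_trans h2 (ler_wpM2l g0 h1).
have g1 : 1 <= g by nra.
have gp : 0 < g by apply: lt_le_trans g1; exact: ltr01.
have h := c_sq_bound g1 hK.
have h5 : (g^-1) ^+ 2 <= s ^+ 2 by rewrite s_sq exprVn; lra.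
have h6 : g^-1 <= s by apply: sq_le (ltW s0) h5.
by rewrite -(invrK g) lef_pV2 ?posrE ?invr_gt0.
Qed.


Lemma one_imp_c Q : is_meet ip E F Q ->
  (forall x, Q x = 0) -> range P = [set y | exists a b, y = E a + F b] -> c < 1.
Proof.
move=> hQ hQ0 hPH.
apply: c_lt1_of_bound.
set X := [set x | E x = x]; set Y := [set y | P y = y /\ F y = 0].
have lT : lin (fun x => x - F x) by apply: lin_sub (@lin_id _ _) lF.
have sX : subsp X.
  split; first by rewrite /X /= (lin0 lE).
  by move=> a x y; rewrite /X /= => hx hy; rewrite lE hx hy.
have sY : subsp Y.
  split; first by rewrite /Y /= (lin0 lP) (lin0 lF).
  by move=> a x y [hx1 hx2] [hy1 hy2]; rewrite /Y /= lP lF hx1 hx2 hy1 hy2 scaler0 addr0.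
have cX : closedS ip X by move=> u l hu hl; apply: (cvg_proj Hh hE hu hl).
have cY : closedS ip Y.
  move=> u l hu hl; split; first by apply: (cvg_proj Hh hPp (fun n => proj1 (hu n)) hl).
  have h1 : cvgV ip (fun n => F (u n)) (F l).
    by apply: (cvg_bnd (C := 1) lF) hl => x; rewrite mul1r; apply: pr_contr.
  have h2 : cvgV ip (fun n => F (u n)) 0.
    by move=> e e0; exists 0%N => n _; rewrite (proj2 (hu n)) subrr (nm0 Hh).
  exact: (cvg_uniq Hh h1 h2).
have bT : forall x, nm (x - F x) <= 2 * nm x.
  move=> x; apply: le_trans (nm_triangle Hh _ _) _; rewrite (nmN Hh).
  have := pr_contr Hh hF x; lra.
have maps : forall x, X x -> Y (x - F x).
  move=> x hx; split.
    by rewrite (linB lP) PF -hx PE.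
  by rewrite (linB lF) (pr_idem hF) subrr.
have surj : forall y, Y y -> exists x, X x /\ x - F x = y.
  move=> y [hy1 hy2].
  have : range P y by exists y.
  rewrite hPH => -[a [b eab]].
  exists (E a); split; first by rewrite /X /= (pr_idem hE).
  have e1 : y = (E a + F b) - F (E a + F b) by rewrite -eab hy2 subr0.
  by rewrite e1 (linD lF) (pr_idem hF) (addrC (F (E a)) (F b)) addrKA.
have inj : forall x, X x -> x - F x = 0 -> x = 0.
  move=> x hx /eqP; rewrite subr_eq0 => /eqP hFx.
  have : range Q x by rewrite (proj2 hQ); split; [exists x|exists x].
  by case=> z _ <-.
have [C hC] := open_map_lite Hh sX cX sY cY lT bT maps surj inj.
by exists C.
Qed.

Lemma main_result Q : is_meet ip E F Q ->
  let EH := range E in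
  let PH := range P in
  let PFH := range (fun x => P x - F x) in
  let EmF := fun x => E x - F x in
  let PFE := fun x => P (E x) - F (E x) in
  (((forall x, Q x = 0) /\ PH = [set y | exists a b, y = E a + F b])
     <-> invertible_between ip PH PH EmF) /\
  (invertible_between ip PH PH EmF <-> invertible_between ip EH PFH PFE) /\
  (invertible_between ip PH PH EmF -> (exists x, E x != 0) ->
   forall G1 G2 : V -> V,
     is_inverse_between ip PH PH EmF G1 ->
     is_inverse_between ip EH PFH PFE G2 ->
     opnorm_on ip PH G1 = (Num.sqrt (1 - opnorm ip (fun x => E (F x)) ^+ 2))^-1 /\
     opnorm_on ip PFH G2 = (Num.sqrt (1 - opnorm ip (fun x => E (F x)) ^+ 2))^-1).
Proof.
move=> hQ EH PH PFH EmF PFE.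
split; [split|split; [split|]].
- by case=> h1 h2; apply: inv2; apply: (one_imp_c hQ).
- exact: two_imp_one.
- by move=> h; apply: inv3; apply: c_lt1_of_2.
- by move=> h; apply: inv2; apply: c_lt1_of_3.
- move=> h2 hx0 G1 G2 hG1 hG2.
  have c1 := c_lt1_of_2 h2.
  split.
  + apply: (norm_id c1 hx0 (range_subsp lP) (proj1 h2) hG1).
    * by move=> x /(pr_range _ hPp) hx; apply: A_lb.
    * move=> x hx; split; last by rewrite /EmF hx.
      by apply/(pr_range _ hPp); rewrite -hx PE.
  + apply: (norm_id c1 hx0 (range_subsp (lin_sub lP lF)) (proj1 (inv3 c1)) hG2).
    * move=> x /(pr_range _ hE) hx; rewrite /PFE PE hx.
      apply: sq_le; first exact: nm_ge0.
      by rewrite exprMn s_sq; apply: EH_lb.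
    * move=> x hx; split; first by exists x.
      by rewrite /PFE PE hx.
Qed.
End Main.

Theorem lemma3p7 (R : realType) (V : lmodType R[i]) (ip : V -> V -> R[i])
    (E F P Q : V -> V) :
  is_hilbert ip ->
  is_projection ip E -> is_projection ip F ->
  is_join ip E F P -> is_meet ip E F Q ->
  let EH := range E in
  let PH := range P in
  let PFH := range (fun x => P x - F x) in
  let EmF := fun x => E x - F x in
  let PFE := fun x => P (E x) - F (E x) in
  (* (1) <-> (2) *)
  (((forall x, Q x = 0) /\ PH = [set y | exists a b, y = E a + F b])
     <-> invertible_between ip PH PH EmF) /\
  (* (2) <-> (3) *)
  (invertible_between ip PH PH EmF <-> invertible_between ip EH PFH PFE) /\
  (* norm identities *)
  (invertible_between ip PH PH EmF -> (exists x, E x != 0) ->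
   forall G1 G2 : V -> V,
     is_inverse_between ip PH PH EmF G1 ->
     is_inverse_between ip EH PFH PFE G2 ->
     opnorm_on ip PH G1 = (Num.sqrt (1 - opnorm ip (fun x => E (F x)) ^+ 2))^-1 /\
     opnorm_on ip PFH G2 = (Num.sqrt (1 - opnorm ip (fun x => E (F x)) ^+ 2))^-1).
Proof.
move=> Hh hE hF hP hQ.
exact: (main_result Hh hE hF hP hQ).
Qed.
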